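(* Let $p$ be a prime and $b$ an integer with $1<b<p$. Write $p=bq+r$ with $0\le r<b$ and $p=b^{-1}s+t$ with $0\le t<b^{-1}$ (division algorithm). Then $$\{x_1^{p-kb}x_2^k\mid 0\le k\le q\}\cap\{x_1^mx_2^{p-mb^{-1}}\mid 0\le m\le s-1\}=\emptyset.$$
   Context: $x_1,x_2$ are variables of the polynomial ring $\mathbb{C}[x_1,x_2]$. $b^{-1}$ is the unique integer $0<b^{-1}<p$ with $bb^{-1}\equiv1\pmod p$. *)

(* Defs.v *)
From HB Require Import structures.
From mathcomp Require Import all_boot all_order all_algebra all_field.
From mathcomp Require Import mpoly.
Set Implicit Arguments. Unset Strict Implicit. Unset Printing Implicit Defensive.
Import GRing.Theory.
Local Open Scope ring_scope.

(* The monomial x_1^a x_2^c in C[x_1,x_2], with C = algC and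
   x_1 = 'X_0, x_2 = 'X_1 in {mpoly algC[2]}. *)
Definition mon2 (a c : nat) : {mpoly algC[2]} :=
  'X_(0 : 'I_2) ^+ a * 'X_(1 : 'I_2) ^+ c.

(* Main.v *)
Require Import Defs.
From HB Require Import structures.
From mathcomp Require Import all_boot all_order all_algebra all_field.
From mathcomp Require Import mpoly.
From mathcomp Require Import zify.
Import GRing.Theory.
Local Open Scope ring_scope.

Lemma mon2_inj a c a' c' : mon2 a c = mon2 a' c' -> a = a' /\ c = c'.
Proof.
rewrite /mon2 !mpolyXn -!mpolyXD => E.
move: E; set mm := (X in 'X_[X] = _) => E.
have := congr1 (fun P : {mpoly algC[2]} => P@_mm) E.
rewrite /= !mcoeffX eqxx /mm.
case: eqP => [H _|_ /eqP]; last by rewrite oner_eq0.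
have H0 := congr1 (fun m : 'X_{1..2} => m ord0) H.
have H1 := congr1 (fun m : 'X_{1..2} => m ord_max) H.
move: H0 H1; rewrite /= !mnmDE !mulmnE !mnm1E /=.
move=> ? ?; split; lia.
Qed.

Theorem lemma3p10 (p b binv : nat) :
  prime p -> (1 < b)%N -> (b < p)%N ->
  (0 < binv)%N -> (binv < p)%N -> (b * binv == 1 %[mod p])%N ->
  forall P : {mpoly algC[2]},
    (exists2 k : nat, (k <= p %/ b)%N & P = mon2 (p - k * b) k) ->
    (exists2 m : nat, (m <= p %/ binv - 1)%N & P = mon2 m (p - m * binv)) ->
    False.
Proof.
move=> _ hb hbp hi hip hmod P [k hk ->] [m hm /mon2_inj [e1 e2]].
have hkb : (k * b <= p)%N by rewrite -leq_divRL // ltnW.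
have hp0 : (0 < p %/ binv)%N by rewrite divn_gt0 // ltnW.
have hmi : ((m + 1) * binv <= p)%N.
  rewrite -leq_divRL //; move: hm hp0; clear; lia.
have hbb : (2 <= b * binv)%N.
  by rewrite -[2%N]muln1 leq_mul.
move: hmod; rewrite eqn_mod_dvd ?(ltnW hbb) // => /dvdnP [j hj].
have hmb : (m * binv + binv <= p)%N by move: hmi; rewrite mulnDl mul1n.
have Hk : (m * binv + k = p)%N.
  move: e2 hmb; clear; generalize (m * binv); lia.
have Hm : (m + k * b = p)%N by move: e1 hkb; clear; lia.
have H2 : (m * binv + k * b * binv = p * binv)%N by rewrite -Hm mulnDl.
have : (k * (b * binv - 1) = p * (binv - 1))%N.
  rewrite !mulnBr !muln1 mulnA; move: H2 Hk; clear; generalize (m * binv) (k * b * binv) (p * binv); lia.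
rewrite hj mulnA (mulnC p) => /eqP.
rewrite eqn_pmul2r; last by move: hbp hb; clear; lia.
move=> /eqP hkj.
have hj0 : (0 < j)%N.
  case: j hj hkj => [|j] //= hj.
  by move: hj hbb; rewrite mul0n; clear; lia.
have : (k <= binv - 1)%N by rewrite -hkj leq_pmulr.
move: hmb Hk hi; clear; generalize (m * binv); lia.
Qed.
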